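(* Every point $\zeta\in\partial(\Gamma,\mathcal{P})$ has a strict $\mathcal{G}$-coding (either a strict conical coding of $\zeta$ or a strict parabolic coding of $\zeta$).
   Context: Setup. $\Gamma$ is a finitely generated group hyperbolic relative to a finite nonempty collection $\mathcal{P}$ of infinite subgroups, with $(\Gamma,\mathcal{P})$ non-elementary, and $\mathcal{S}$ a finite symmetric generating set with $P\cap\mathcal{S}$ generating $P$ for each $P\in\mathcal{P}$. $X$ is the Groves–Manning cusped space (the Cayley graph with combinatorial horoballs glued along the cosets $gP$), a locally finite graph with unit edges, metric $d_X$, $\delta$-hyperbolic for a fixed integer $\delta\ge1$; $|g|_X=d_X(\mathrm{id},g)$. Its Gromov boundary is the Bowditch boundary $\partial(\Gamma,\mathcal{P})$, with a fixed metric $d_\partial$ (balls $B_r$, neighborhoods $N_r$, closed neighborhoods $\overline N_r$, $\operatorname{diam}$ w.r.t. $d_\partial$). $\Pi$ is the finite set of points fixed by groups in $\mathcal{P}$, $\Gamma_p$ the group fixing $p\in\Pi$; translates $gp$ are parabolic points, and all other boundary points are conical limit points. $D>0$ is such that any distinct $x,y$ have some $g\in\Gamma$ with $d_\partial(gx,gy)>D$; for $p\in\Pi$, $K_p\subset\partial(\Gamma,\mathcal{P})\setminus\{p\}$ is compact with $\Gamma_pK_p=\partial(\Gamma,\mathcal{P})\setminus\{p\}$, and $D_\Pi>0$ satisfies $D_\Pi<\operatorname{diam}K_p$, $D_\Pi<d_\partial(K_p,p)$ for all $p$. Automaton. Fix $0<\varepsilon<\min(D/5,D_\Pi/5)$,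 a finite set $Z\subset\partial(\Gamma,\mathcal{P})$, and for each $z\in Z$ open sets $V(z),W(z),\hat V(z),\hat W(z)$ and a set $L(z)\subset\Gamma$ such that: if $z$ is conical, $L(z)=\{\alpha_z\}$, $\hat V(z)=\alpha_z^{-1}V(z)$, $\hat W(z)=\alpha_z^{-1}W(z)$; if $z=gp$ is parabolic ($p\in\Pi$), then $L(z)=g\Gamma_p\setminus F_z$ for a finite set $F_z$, $\hat V(z)\subset\hat W(z)\subset\partial(\Gamma,\mathcal{P})\setminus\{p\}$ and $p\notin\overline N_\varepsilon(\hat W(z))$; the sets $V(z)$, $z\in Z$, cover $\partial(\Gamma,\mathcal{P})$; and for all $z\in Z$: (C1) $\operatorname{diam}W(z)<\varepsilon$; (C2) $\operatorname{diam}\hat W(z)>4\varepsilon$; (C3) $\overline N_{2\varepsilon}(\hat V(z))\subset\hat W(z)$; (C4) $W(z)=\{z\}\cup\bigcup_{\alpha\in L(z)}\alpha\hat W(z)$; (C5) $V(z)=\{z\}\cup\bigcup_{\alpha\in L(z)}\alpha\hat V(z)$ and $\overline{V(z)}\subset W(z)$; (C6) for all $y,z\in Z$, $\overline{\hat V(z)}\cap\overline{V(y)}=\emptyset$ iff $\hat V(z)\cap V(y)=\emptyset$. The automaton $\mathcal{G}$ is the directed graph with vertex set $Z$ where, for $y,z\in Z$, there is no edge from $z$ to $y$ if $\hat V(z)\cap V(y)=\emptyset$, and otherwise there is exactly one edge from $z$ to $y$ labeled $\alpha$ for each $\alpha\in L(z)$. For an edge $e$, $\iota(e),\tau(e),\mathrm{Lab}(e)$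 denote its initial vertex, terminal vertex and label. Codings. A strict conical coding is an infinite edge path $\mathbf e=(e_k)_{k\ge1}$ in $\mathcal{G}$; writing $\alpha_k=\mathrm{Lab}(e_k)$, $z_k=\tau(e_k)$ ($k\ge1$), $z_0=\iota(e_1)$, it is a strict coding of $\zeta$ if $\zeta\in\bigcap_{k\ge0}\alpha_1\cdots\alpha_k\overline{W(z_k)}$. A strict parabolic coding is a finite edge path $e_1,\dots,e_n$ ($n\ge0$; for $n=0$ it is a single vertex) whose final vertex $q$ is parabolic; it is a strict coding of $\zeta$ if $\zeta=\alpha_1\cdots\alpha_nq$. *)

(* Defs.v *)
From Stdlib Require Import Reals List.
Open Scope R_scope.

Record BoundarySetting (Gam B : Type) := {
  gmul : Gam -> Gam -> Gam;
  ginv : Gam -> Gam;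
  gone : Gam;
  gmulA : forall a b c, gmul a (gmul b c) = gmul (gmul a b) c;
  gmul1l : forall a, gmul gone a = a;
  gmul1r : forall a, gmul a gone = a;
  gmulVl : forall a, gmul (ginv a) a = gone;
  gmulVr : forall a, gmul a (ginv a) = gone;
  act : Gam -> B -> B;
  act1 : forall x, act gone x = x;
  actM : forall g h x, act (gmul g h) x = act g (act h x);
  dist : B -> B -> R;
  dist_ge0 : forall x y, 0 <= dist x y;
  dist_eq0 : forall x y, dist x y = 0 <-> x = y;
  dist_sym : forall x y, dist x y = dist y x;
  dist_tri : forall x y z, dist x z <= dist x y + dist y z;
  act_cont : forall g x e, 0 < e -> exists r, 0 < r /\
      forall y, dist x y < r -> dist (act g x) (act g y) < e;
  (* the finite nonempty set Pi of points fixed by the peripheral groups *)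
  Pi : list B;
  Pi_nonempty : Pi <> nil
}.

Arguments gmul {Gam B} _ _ _.
Arguments ginv {Gam B} _ _.
Arguments gone {Gam B} _.
Arguments act {Gam B} _ _ _.
Arguments dist {Gam B} _ _ _.
Arguments Pi {Gam B} _.

Section Defs.
Context {Gam B : Type} (st : BoundarySetting Gam B).

Definition d := dist st.
Definition ac := act st.

Definition stab (p : B) : Gam -> Prop := fun g => ac g p = p.

Definition coset (g : Gam) (p : B) : Gam -> Prop :=
  fun a => stab p (gmul st (ginv st g) a).

Definition translate (g : Gam) (A : B -> Prop) : B -> Prop :=
  fun x => A (ac (ginv st g) x).

Definition parabolic (z : B) : Prop :=
  exists g p, In p (Pi st) /\ z = ac g p.
Definition conical (z : B) : Prop := ~ parabolic z.

Definition openS (U : B -> Prop) : Prop :=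
  forall x, U x -> exists r, 0 < r /\ forall y, d x y < r -> U y.
Definition closure (A : B -> Prop) : B -> Prop :=
  fun x => forall r, 0 < r -> exists a, A a /\ d x a < r.
Definition nbhd (r : R) (A : B -> Prop) : B -> Prop :=
  fun x => exists a, A a /\ d x a < r.
(* closed r-neighbourhood: {x | d(x, A) <= r} *)
Definition cl_nbhd (r : R) (A : B -> Prop) : B -> Prop :=
  fun x => forall e, 0 < e -> exists a, A a /\ d x a < r + e.
Definition diam_lt (A : B -> Prop) (r : R) : Prop :=
  exists s, s < r /\ forall x y, A x -> A y -> d x y <= s.
Definition diam_gt (A : B -> Prop) (r : R) : Prop :=
  exists x y, A x /\ A y /\ r < d x y.
Definition seq_compact (K : B -> Prop) : Prop :=
  forall u : nat -> B, (forall n, K (u n)) ->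
    exists (phi : nat -> nat) l, (forall n, (phi n < phi (Datatypes.S n))%nat) /\ K l /\
      forall e, 0 < e -> exists N, forall n, (N <= n)%nat -> d (u (phi n)) l < e.

Definition disjoint (A A' : B -> Prop) : Prop := forall x, ~ (A x /\ A' x).

Definition finite_set {T : Type} (F : T -> Prop) : Prop :=
  exists l : list T, forall a, F a -> In a l.

Definition standing_hyps (D DPi eps : R) (K : B -> B -> Prop) : Prop :=
  0 < D /\
  (forall x y, x <> y -> exists g, D < d (ac g x) (ac g y)) /\
  0 < DPi /\
  (forall p, In p (Pi st) ->
     seq_compact (K p) /\ ~ K p p /\
     (forall x, x <> p <-> exists g k, stab p g /\ K p k /\ x = ac g k) /\
     diam_gt (K p) DPi /\
     (exists r, DPi < r /\ forall k, K p k -> r <= d k p)) /\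
  0 < eps /\ eps < D / 5 /\ eps < DPi / 5.

Definition automaton_hyps (eps : R) (Z : list B)
    (V W hV hW : B -> B -> Prop) (L : B -> Gam -> Prop) : Prop :=
  (forall z, In z Z ->
     openS (V z) /\ openS (W z) /\ openS (hV z) /\ openS (hW z) /\
     (conical z -> exists alpha,
        (forall a, L z a <-> a = alpha) /\
        (forall x, hV z x <-> V z (ac alpha x)) /\
        (forall x, hW z x <-> W z (ac alpha x))) /\
     (parabolic z -> exists g p, In p (Pi st) /\ z = ac g p /\
        (exists F : Gam -> Prop, finite_set F /\
           forall a, L z a <-> (coset g p a /\ ~ F a)) /\
        (forall x, hV z x -> hW z x) /\
        (forall x, hW z x -> x <> p) /\
        ~ cl_nbhd eps (hW z) p) /\
     diam_lt (W z) eps /\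
     diam_gt (hW z) (4 * eps) /\
     (forall x, cl_nbhd (2 * eps) (hV z) x -> hW z x) /\
     (forall x, W z x <-> (x = z \/ exists a, L z a /\ translate a (hW z) x)) /\
     (* (C5) *) (forall x, V z x <-> (x = z \/ exists a, L z a /\ translate a (hV z) x)) /\
     (forall x, closure (V z) x -> W z x)) /\
  (forall x, exists z, In z Z /\ V z x) /\
  (forall y z, In y Z -> In z Z ->
     (disjoint (closure (hV z)) (closure (V y)) <-> disjoint (hV z) (V y))).

Definition edge (Z : list B) (V hV : B -> B -> Prop) (L : B -> Gam -> Prop)
    (z : B) (alpha : Gam) (y : B) : Prop :=
  In z Z /\ In y Z /\ L z alpha /\ ~ disjoint (hV z) (V y).

(* alpha_1 ... alpha_k, with the labels indexed from 1 (alpha 0 unused) *)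
Fixpoint prodl (alpha : nat -> Gam) (k : nat) : Gam :=
  match k with
  | O => gone st
  | Datatypes.S k' => gmul st (prodl alpha k') (alpha k)
  end.
End Defs.

Section Codings.
Context {Gam B : Type} (st : BoundarySetting Gam B).
Context (Z : list B) (V W hV : B -> B -> Prop) (L : B -> Gam -> Prop).

Definition strict_conical_coding (zeta : B) : Prop :=
  exists (z : nat -> B) (alpha : nat -> Gam),
    (forall k, edge Z V hV L (z k) (alpha (Datatypes.S k)) (z (Datatypes.S k))) /\
    (forall k, translate st (prodl st alpha k) (closure st (W (z k))) zeta).

Definition strict_parabolic_coding (zeta : B) : Prop :=
  exists (n : nat) (z : nat -> B) (alpha : nat -> Gam),
    In (z O) Z /\
    (forall k, (k < n)%nat -> edge Z V hV L (z k) (alpha (Datatypes.S k)) (z (Datatypes.S k))) /\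
    parabolic st (z n) /\
    zeta = act st (prodl st alpha n) (z n).
End Codings.

(* Main.v *)
Require Import Defs.
From Stdlib Require Import Reals List.
From Stdlib Require Import Classical ClassicalEpsilon.
Open Scope R_scope.

Lemma ginv_mul (Gam B : Type) (st : BoundarySetting Gam B) (p a : Gam) :
  ginv st (gmul st p a) = gmul st (ginv st a) (ginv st p).
Proof.
  set (q := gmul st p a).
  assert (H : gmul st q (gmul st (ginv st a) (ginv st p)) = gone st).
  { unfold q. rewrite <- gmulA. rewrite (gmulA _ _ st a). rewrite gmulVr, gmul1l.
    apply gmulVr. }
  rewrite <- (gmul1r _ _ st (ginv st q)). rewrite <- H. rewrite gmulA.
  rewrite gmulVl. apply gmul1l.
Qed.

Lemma act_inv_mul (Gam B : Type) (st : BoundarySetting Gam B) (g a : Gam) x :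
  act st (ginv st (gmul st g a)) x = act st (ginv st a) (act st (ginv st g) x).
Proof. rewrite ginv_mul. apply actM. Qed.

Theorem mainTheorem7 (Gam B : Type) (st : BoundarySetting Gam B)
    (D DPi eps : R) (K : B -> B -> Prop)
    (Z : list B) (V W hV hW : B -> B -> Prop) (L : B -> Gam -> Prop) :
  standing_hyps st D DPi eps K ->
  automaton_hyps st eps Z V W hV hW L ->
  forall zeta : B,
    strict_conical_coding st Z V W hV L zeta \/
    strict_parabolic_coding st Z V hV L zeta.
Proof.
  intros _ [Hz [Hcov _]] zeta.
  assert (Step : forall z x, In z Z -> V z x ->
     (parabolic st z /\ x = z) \/
     exists a y, edge Z V hV L z a y /\ V y (act st (ginv st a) x)).
  { intros z x Hin Hx.
    destruct (Hz z Hin) as (_&_&_&_&Hcon&_&_&_&_&_&HC5&_).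
    assert (Ha : exists a, L z a /\ hV z (act st (ginv st a) x) \/
                 (parabolic st z /\ x = z)).
    { destruct (proj1 (HC5 x) Hx) as [Exz | [a [La Ta]]].
      - destruct (classic (parabolic st z)) as [Hp|Hc].
        + exists (gone st). right. auto.
        + destruct (Hcon Hc) as [al [HL [HhV _]]].
          exists al. left. split. apply HL; reflexivity.
          apply HhV. unfold ac. rewrite <- actM, gmulVr, act1. subst x. exact Hx.
      - exists a. left. split; auto. }
    destruct Ha as [a [[La Ha] | Hp]]; [|left; exact Hp].
    right. destruct (Hcov (act st (ginv st a) x)) as [y [Hy Vy]].
    exists a, y. split; [|exact Vy].
    repeat split; auto. intro Hd. apply (Hd (act st (ginv st a) x)). auto. }
  set (S := (B * (Gam * Gam))%type).
  set (I := fun s : S => In (fst s) Z /\ V (fst s) (act st (ginv st (fst (snd s))) zeta)).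
  set (stop := fun s : S => parabolic st (fst s) /\ act st (ginv st (fst (snd s))) zeta = fst s).
  set (nextP := fun (s t : S) => exists a y, edge Z V hV L (fst s) a y /\
        V y (act st (ginv st (gmul st (fst (snd s)) a)) zeta) /\
        t = (y, (gmul st (fst (snd s)) a, a))).
  set (step := fun s : S =>
     match excluded_middle_informative (exists t, nextP s t) with
     | left h => proj1_sig (constructive_indefinite_description _ h)
     | right _ => (fst s, (fst (snd s), gone st))
     end).
  assert (StepP : forall s, I s -> I (step s) /\
     ((exists a y, edge Z V hV L (fst s) a y /\ step s = (y, (gmul st (fst (snd s)) a, a)))
      \/ (stop s /\ step s = (fst s, (fst (snd s), gone st))))).
  { intros s [Hin HV]. unfold step.
    destruct (excluded_middle_informative (exists t, nextP s t)) as [h|h].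
    - destruct (constructive_indefinite_description _ h) as [t Ht]. simpl.
      destruct Ht as [a [y [He [Hv Et]]]]. subst t.
      split. split; simpl; [apply He|exact Hv].
      left. exists a, y. auto.
    - destruct (Step _ _ Hin HV) as [Hst | [a [y [He Hv]]]].
      + split. split; simpl; auto. right. split; auto.
      + exfalso. apply h. exists (y, (gmul st (fst (snd s)) a, a)).
        exists a, y. split; auto. split; auto. rewrite act_inv_mul. exact Hv. }
  destruct (Hcov zeta) as [z0 [Hz0 HV0]].
  set (s0 := (z0, (gone st, gone st)) : S).
  set (sq := fun n => Nat.iter n step s0).
  assert (Iseq : forall n, I (sq n)).
  { induction n as [|n IH].
    - split; simpl; auto.
      rewrite <- (gmul1l _ _ st (ginv st (gone st))), gmulVr, act1. exact HV0.
    - change (sq (Datatypes.S n)) with (step (sq n)). apply (StepP _ IH). }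
  set (alpha := fun k => snd (snd (sq k))).
  set (zf := fun k => fst (sq k)).
  assert (Gseq : forall n, fst (snd (sq n)) = prodl st alpha n).
  { induction n as [|n IH].
    - reflexivity.
    - simpl prodl. unfold alpha at 2. change (sq (Datatypes.S n)) with (step (sq n)).
      destruct (proj2 (StepP _ (Iseq n))) as [[a [y [_ E]]] | [_ E]]; rewrite E; simpl;
        rewrite <- IH; auto. rewrite gmul1r. reflexivity. }
  assert (EdgeOr : forall k, edge Z V hV L (zf k) (alpha (Datatypes.S k)) (zf (Datatypes.S k))
                            \/ stop (sq k)).
  { intro k. unfold zf, alpha. change (sq (Datatypes.S k)) with (step (sq k)).
    destruct (proj2 (StepP _ (Iseq k))) as [[a [y [He E]]] | [Hs _]].
    - left. rewrite E. exact He.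
    - right. exact Hs. }
  assert (Pn : forall n, (exists m, stop (sq m) /\ forall k, (k < m)%nat ->
                 edge Z V hV L (zf k) (alpha (Datatypes.S k)) (zf (Datatypes.S k)))
              \/ (forall k, (k < n)%nat ->
                 edge Z V hV L (zf k) (alpha (Datatypes.S k)) (zf (Datatypes.S k)))).
  { induction n as [|n IH].
    - right. intros k Hk. inversion Hk.
    - destruct IH as [IH|IH]; [left; exact IH|].
      destruct (EdgeOr n) as [He|Hs].
      + right. intros k Hk. destruct (Nat.eq_dec k n) as [->|Hne]; auto.
        apply IH. Stdlib.micromega.Lia.lia.
      + left. exists n. auto. }
  destruct (classic (exists n, stop (sq n))) as [[n Hn] | Hno].
  - right. destruct (Pn n) as [[m [Hm Hpre]] | Hpre].
    2: { exists n, zf, alpha. split; [apply (Iseq 0%nat)|]. split; [exact Hpre|].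
         destruct Hn as [Hp Hz']. split; [exact Hp|].
         unfold zf. rewrite <- Hz', Gseq. rewrite <- actM, gmulVr, act1. reflexivity. }
    exists m, zf, alpha. split; [apply (Iseq 0%nat)|]. split; [exact Hpre|].
    destruct Hm as [Hp Hz']. split; [exact Hp|].
    unfold zf. rewrite <- Hz', Gseq. rewrite <- actM, gmulVr, act1. reflexivity.
  - left. exists zf, alpha. split.
    + intro k. destruct (EdgeOr k) as [He|Hs]; auto. exfalso. apply Hno. eauto.
    + intro k. unfold translate, closure. intros r Hr.
      exists (ac st (ginv st (prodl st alpha k)) zeta). split.
      * destruct (Iseq k) as [Hin HV]. rewrite Gseq in HV.
        destruct (Hz _ Hin) as (_&_&_&_&_&_&_&_&_&_&_&HW).
        apply HW. intros r' Hr'. exists (act st (ginv st (prodl st alpha k)) zeta).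
        split; [exact HV|]. unfold d. rewrite (proj2 (dist_eq0 _ _ st _ _) eq_refl). exact Hr'.
      * unfold d. rewrite (proj2 (dist_eq0 _ _ st _ _) eq_refl). exact Hr.
Qed.
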